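(* Let $n\ge4$ and let $\lambda=(a_1,\dots,a_n)$ (usual coordinates) be a dominant weight of $SL(n)$ such that all $a_i\notin\mathbb Z$ and $|a_i|>1$ for some $i$. If $M(\lambda)$ contains no point three of whose coordinates equal $\alpha+1,\alpha,\alpha-1$ for some $\alpha\in\mathbb R$, then $$\lambda=\Big(\tfrac{2n-2}{n},-\tfrac2n,\dots,-\tfrac2n\Big)\quad\text{or}\quad \lambda=\Big(\tfrac2n,\dots,\tfrac2n,-\tfrac{2n-2}{n}\Big).$$
   Context: Setup for $SL(n)$: $\varepsilon_1,\dots,\varepsilon_n$ is the standard basis of $\mathbb Q^n$, $e_i=\varepsilon_i-\frac1n(1,\dots,1)$; the character lattice $\mathfrak X(T)$ of the diagonal torus is identified with the $\mathbb Z$-span of $e_1,\dots,e_n$ inside $\{y\in\mathbb Q^n:\sum y_i=0\}$ (the $y_i$ are the ''usual coordinates''). $W=S_n$ acts by permuting coordinates. A weight is dominant if $y_1\ge y_2\ge\dots\ge y_n$. The root lattice is $\Phi=\{\sum a_ie_i\mid a_i\in\mathbb Z,\ \sum a_i\equiv0\pmod n\}$. For a dominant weight $\lambda$, $M(\lambda)=\mathrm{conv}\{w\lambda\mid w\in W\}\cap(\lambda+\Phi)$. *)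

(* Defs.v *)
From HB Require Import structures.
From mathcomp Require Import all_boot all_order all_fingroup all_algebra.
Set Implicit Arguments. Unset Strict Implicit. Unset Printing Implicit Defensive.
Import Order.TTheory GRing.Theory Num.Theory.
Local Open Scope ring_scope.

Definition ebasis (n : nat) (i : 'I_n) : 'rV[rat]_n :=
  \row_(j < n) ((i == j)%:R - (n%:R)^-1).

Definition is_weight (n : nat) (y : 'rV[rat]_n) : Prop :=
  exists b : 'I_n -> int, y = \sum_(i < n) (b i)%:~R *: ebasis i.

Definition dominant (n : nat) (y : 'rV[rat]_n) : Prop :=
  forall i j : 'I_n, (i <= j)%N -> y ord0 j <= y ord0 i.

Definition in_root_lattice (n : nat) (y : 'rV[rat]_n) : Prop :=
  exists a : 'I_n -> int, (n%:Z %| \sum_(i < n) a i)%Z /\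
    y = \sum_(i < n) (a i)%:~R *: ebasis i.

Definition Wact (n : nat) (w : 'S_n) (y : 'rV[rat]_n) : 'rV[rat]_n :=
  \row_(j < n) y ord0 (w^-1 j)%g.

Definition in_conv_orbit (n : nat) (lam x : 'rV[rat]_n) : Prop :=
  exists c : 'S_n -> rat, (forall w, 0 <= c w) /\ \sum_(w : 'S_n) c w = 1 /\
    x = \sum_(w : 'S_n) c w *: Wact w lam.

Definition inM (n : nat) (lam x : 'rV[rat]_n) : Prop :=
  in_conv_orbit lam x /\ in_root_lattice (x - lam).

Definition has_triple (n : nat) (x : 'rV[rat]_n) : Prop :=
  exists (i j k : 'I_n) (alpha : rat), [/\ i != j, j != k & i != k] /\
    [/\ x ord0 i = alpha + 1, x ord0 j = alpha & x ord0 k = alpha - 1].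

Definition lam_first (n : nat) : 'rV[rat]_n :=
  \row_(j < n) (if val j == 0%N then (2 * n%:R - 2) / n%:R else - (2 / n%:R)).

Definition lam_last (n : nat) : 'rV[rat]_n :=
  \row_(j < n) (if val j == n.-1 then - ((2 * n%:R - 2) / n%:R) else 2 / n%:R).

(* Main.v *)
Require Import Defs.
From Stdlib Require Import Ring.
From HB Require Import structures.
From mathcomp Require Import all_boot all_order all_fingroup all_algebra.
Import Order.TTheory GRing.Theory Num.Theory.
Local Open Scope ring_scope.
Set Implicit Arguments. Unset Strict Implicit. Unset Printing Implicit Defensive.

Definition R0 : rat := 0.
Definition R1 : rat := 1.
Definition Radd (a b : rat) : rat := a + b.
Definition Rmul (a b : rat) : rat := a * b.
Definition Ropp (a : rat) : rat := - a.
Definition Rsub (a b : rat) : rat := a - b.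
Lemma rat_rt : @ring_theory rat R0 R1 Radd Rmul Rsub Ropp (@eq rat).
Proof.
split=> //; rewrite /R0/R1/Radd/Rmul/Rsub/Ropp; [exact: add0r|exact: addrC|exact: addrA|exact: mul1r|exact: mulrC|exact: mulrA|exact: mulrDl|exact: subrr].
Qed.
Add Ring ratr : rat_rt.
Lemma radd0I (a b : rat) : Radd a R0 = Radd b R0 -> a = b.
Proof. by rewrite /Radd /R0 !addr0. Qed.
Ltac rnorm := apply: radd0I; rewrite -?[GRing.one _]/R1 -?[Algebra.zero _]/R0 -?[_ + _]/(Radd _ _) -?[_ * _]/(Rmul _ _) -?[- _]/(Ropp _); match goal with |- @eq _ ?a ?b => change (@eq rat a b) end.

Lemma conv_self n (lam : 'rV[rat]_n) : in_conv_orbit lam lam.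
Proof.
exists (fun w => (w == 1%g)%:R); split; first by move=> w; rewrite ler0n.
split.
  by rewrite (bigD1 1%g) //= eqxx big1 ?addr0 // => w /negbTE ->.
rewrite (bigD1 1%g) //= eqxx scale1r big1 ?addr0.
  by apply/rowP=> j; rewrite mxE invg1 perm1.
by move=> w /negbTE ->; rewrite scale0r.
Qed.

Lemma conv_comb n (lam x y : 'rV[rat]_n) t :
  in_conv_orbit lam x -> in_conv_orbit lam y -> 0 <= t -> t <= 1 ->
  in_conv_orbit lam (t *: x + (1 - t) *: y).
Proof.
move=> [c1 [c1p [c1s ->]]] [c2 [c2p [c2s ->]]] t0 t1.
exists (fun w => t * c1 w + (1 - t) * c2 w); split.
  by move=> w; rewrite addr_ge0 ?mulr_ge0 ?subr_ge0.
split.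
  by rewrite big_split /= -!mulr_sumr c1s c2s !mulr1 addrC subrK.
rewrite !scaler_sumr -big_split /=; apply: eq_bigr => w _.
by rewrite !scalerA -scalerDl.
Qed.

Lemma Wact_comp n (s w : 'S_n) (lam : 'rV[rat]_n) :
  Wact s (Wact w lam) = Wact (w * s)%g lam.
Proof. by apply/rowP=> j; rewrite !mxE invMg permM. Qed.

Lemma Wact_lin n (s : 'S_n) (c : 'S_n -> rat) (F : 'S_n -> 'rV[rat]_n) :
  Wact s (\sum_w c w *: F w) = \sum_w c w *: Wact s (F w).
Proof.
apply/rowP=> j; rewrite !mxE !summxE; apply: eq_bigr => w _; by rewrite !mxE.
Qed.

Lemma conv_perm n (lam x : 'rV[rat]_n) s :
  in_conv_orbit lam x -> in_conv_orbit lam (Wact s x).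
Proof.
move=> [c [cp [cs ->]]].
exists (fun v => c (v * s^-1)%g); split; first by move=> v; apply: cp.
split.
  rewrite -cs (reindex_inj (mulIg s)) /=; apply: eq_bigr => w _.
  by congr (c _); exact: mulgK.
rewrite Wact_lin [RHS](reindex_inj (mulIg s)) /=; apply: eq_bigr => w _.
by rewrite Wact_comp; congr (c _ *: _); symmetry; exact: mulgK.
Qed.

Definition dl n (i : 'I_n) : 'rV[rat]_n := \row_l ((l == i)%:R).
Definition tr n (x : 'rV[rat]_n) (i j : 'I_n) (d : rat) := x + d *: (dl j - dl i).

Lemma trE n (x : 'rV[rat]_n) i j d l :
  tr x i j d ord0 l = x ord0 l + d * ((l == j)%:R - (l == i)%:R).
Proof. by rewrite !mxE. Qed.

Lemma trEi n (x : 'rV[rat]_n) i j d : i != j -> tr x i j d ord0 i = x ord0 i - d.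
Proof. by move=> /negbTE h; rewrite trE h eqxx sub0r mulrN1. Qed.

Lemma trEj n (x : 'rV[rat]_n) i j d : i != j -> tr x i j d ord0 j = x ord0 j + d.
Proof. by rewrite eq_sym => /negbTE h; rewrite trE h eqxx subr0 mulr1. Qed.

Lemma trEo n (x : 'rV[rat]_n) i j d l : l != i -> l != j -> tr x i j d ord0 l = x ord0 l.
Proof. by move=> /negbTE h1 /negbTE h2; rewrite trE h1 h2 subrr mulr0 addr0. Qed.

Definition Reach n (lam x : 'rV[rat]_n) :=
  [/\ in_conv_orbit lam x, (forall l, x ord0 l - lam ord0 l \is a Num.int) &
   \sum_l x ord0 l = \sum_l lam ord0 l].

Lemma Reach_refl n (lam : 'rV[rat]_n) : Reach lam lam.
Proof. by split=> [|l|//]; [exact: conv_self | rewrite subrr rpred0]. Qed.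

Lemma aux1 (t a b : rat) : (1 - t) * a + t * b = a - t * (a - b).
Proof. by rewrite mulrBl mul1r mulrBr opprB addrA addrAC. Qed.

Lemma sum_dl n (j : 'I_n) : \sum_l ((l == j)%:R : rat) = 1.
Proof. by rewrite (bigD1 j) //= eqxx big1 ?addr0 // => l /negbTE ->. Qed.

Lemma transfer n (lam x : 'rV[rat]_n) i j d :
  Reach lam x -> i != j -> d \is a Num.int -> 0 <= d -> d <= x ord0 i - x ord0 j ->
  Reach lam (tr x i j d).
Proof.
move=> [cx ix sx] ij di d0 dle; split.
- have [e|ne] := eqVneq (x ord0 i) (x ord0 j).
    have -> : d = 0 by apply/eqP; rewrite eq_le d0 andbT -(subrr (x ord0 i)) {2}e.
    by rewrite /tr scale0r addr0.
  have pos : 0 < x ord0 i - x ord0 j.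
    by rewrite lt0r subr_eq0 ne (le_trans d0 dle).
  set t := d / (x ord0 i - x ord0 j).
  have t0 : 0 <= t by rewrite divr_ge0 // ltW.
  have t1 : t <= 1 by rewrite ler_pdivrMr // mul1r.
  have td : t * (x ord0 i - x ord0 j) = d by rewrite divfK // gt_eqF.
  have := conv_comb (conv_perm (tperm i j) cx) cx t0 t1.
  suff -> : t *: Wact (tperm i j) x + (1 - t) *: x = tr x i j d by [].
  apply/rowP=> l; rewrite trE !mxE tpermV addrC.
  case: tpermP => [->|->|/eqP li /eqP lj].
  + by rewrite eqxx (negbTE ij) aux1 td sub0r mulrN1.
  + rewrite eqxx eq_sym (negbTE ij) aux1 subr0 mulr1 -td -mulrN opprB.
    done.
  + by rewrite (negbTE li) (negbTE lj) subrr mulr0 addr0 aux1 subrr mulr0 subr0.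
- by move=> l; rewrite trE addrAC rpredD // rpredM // rpredB // natr_int.
- rewrite -sx; under eq_bigr => l _ do rewrite trE.
  by rewrite big_split /= -mulr_sumr sumrB !sum_dl subrr mulr0 addr0.
Qed.

Lemma int_ge1 (x : rat) : x \is a Num.int -> 0 < x -> 1 <= x.
Proof. by move=> /intrP [z ->]; rewrite ltr0z ler1z gtz0_ge1. Qed.

Lemma int_lt (x y : rat) : y - x \is a Num.int -> x < y -> x + 1 <= y.
Proof. by move=> h lt; rewrite -lerBrDl int_ge1 // subr_gt0. Qed.

Definition Ldiff n (x : 'rV[rat]_n) := forall l m, x ord0 l - x ord0 m \is a Num.int.

Lemma Reach_diff n (lam x : 'rV[rat]_n) : Ldiff lam -> Reach lam x -> Ldiff x.
Proof.
move=> hl [_ ix _] l m.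
have -> : x ord0 l - x ord0 m =
   (x ord0 l - lam ord0 l) - (x ord0 m - lam ord0 m) + (lam ord0 l - lam ord0 m).
  by rnorm; ring.
by apply: rpredD; [apply: rpredB|]; [apply: ix|apply: ix|apply: hl].
Qed.

Lemma core3s n (lam x : 'rV[rat]_n) i j k a :
  Ldiff lam -> Reach lam x -> i != j -> j != k -> i != k ->
  x ord0 j <= x ord0 i -> x ord0 k <= x ord0 j -> x ord0 k < x ord0 i ->
  a - x ord0 k \is a Num.int -> x ord0 i + x ord0 j + x ord0 k = a + a + a ->
  exists y, Reach lam y /\ has_triple y.
Proof.
move=> hl rx ij jk ik hji hkj hki ha hs.
have hki' := ltW hki.
have dx := Reach_diff hl rx.
have ji : j != i by rewrite eq_sym.
have kj : k != j by rewrite eq_sym.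
have ki : k != i by rewrite eq_sym.
move: hji hki hki' hs; move Evi : (x ord0 i) => vi hji hki hki' hs.
move: hji hkj hs; move Evj : (x ord0 j) => vj hji hkj hs.
move: hkj hki hki' ha hs; move Evk : (x ord0 k) => vk hkj hki hki' ha hs.
have alt : a < vi.
  rewrite ltNge; apply/negP => le.
  have h1 := ler_ltD (lerD (lexx vi) hji) hki.
  have h2 := lerD (lerD le le) le.
  by move: (lt_le_trans h1 h2); rewrite hs ltxx.
have ka : vk <= a.
  rewrite leNgt; apply/negP => lt.
  have h1 := lerD (lerD hki' hkj) (lexx vk).
  have h2 := ltrD (ltrD lt lt) lt.
  by move: (lt_le_trans h2 h1); rewrite hs ltxx.
have ia : vi - a \is a Num.int.
  have -> : vi - a = (vi - vk) - (a - vk) by rnorm; ring.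
  by rewrite rpredB // -?Evi -?Evj -?Evk dx.
have a1 : a + 1 <= vi by apply: int_lt.
set d1 := vi - a - 1.
have d1i : d1 \is a Num.int by rewrite rpredB // rpred1.
have d10 : 0 <= d1 by rewrite subr_ge0 lerBrDr addrC.
have d1le : d1 <= vi - vk.
  have -> : vi - vk = d1 + (a + 1 - vk) by rewrite /d1; rnorm; ring.
  by rewrite lerDl subr_ge0 (le_trans ka) // lerDl ler01.
have r1 : Reach lam (tr x i k d1) by apply: transfer => //; rewrite Evi Evk.
have x1i : tr x i k d1 ord0 i = a + 1 by rewrite trEi // Evi /d1; rnorm; ring.
have x1j : tr x i k d1 ord0 j = vj by rewrite trEo.
have e1 : vk + d1 = a + a - 1 - vj.
  rewrite /d1; transitivity (vi + vj + vk - vj - a - 1); first by rnorm; ring.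
  by rewrite hs; rnorm; ring.
have x1k : tr x i k d1 ord0 k = a + a - 1 - vj by rewrite trEj // Evk.
have [ja|aj] := lerP a vj.
  set d2 := vj - a.
  have d2i : d2 \is a Num.int.
    have -> : d2 = (vj - vk) - (a - vk) by rewrite /d2; rnorm; ring.
    by rewrite rpredB // -?Evi -?Evj -?Evk dx.
  have d20 : 0 <= d2 by rewrite subr_ge0.
  have d2le : d2 <= tr x i k d1 ord0 j - tr x i k d1 ord0 k.
    rewrite x1j x1k.
    have -> : vj - (a + a - 1 - vj) = d2 + (vj - a + 1) by rewrite /d2; rnorm; ring.
    by rewrite lerDl addr_ge0 // ?subr_ge0 // ler01.
  have r2 := transfer r1 jk d2i d20 d2le.
  exists (tr (tr x i k d1) j k d2); split => //.
  exists i, j, k, a; split; first by split.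
  split.
  - by rewrite trEo // x1i.
  - by rewrite trEi // x1j /d2; rnorm; ring.
  - by rewrite trEj // x1k /d2; rnorm; ring.
have aji : a - vj \is a Num.int.
  have -> : a - vj = (a - vk) - (vj - vk) by rnorm; ring.
  by rewrite rpredB // -?Evi -?Evj -?Evk dx.
have ja1 : vj + 1 <= a by apply: int_lt.
set d2 := a - vj - 1.
have d2i : d2 \is a Num.int by rewrite rpredB // rpred1.
have d20 : 0 <= d2 by rewrite subr_ge0 lerBrDr addrC.
have d2le : d2 <= tr x i k d1 ord0 k - tr x i k d1 ord0 j.
  rewrite x1j x1k.
  have -> : a + a - 1 - vj - vj = d2 + (a - vj) by rewrite /d2; rnorm; ring.
  by rewrite lerDl subr_ge0 ltW.
have r2 := transfer r1 kj d2i d20 d2le.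
exists (tr (tr x i k d1) k j d2); split => //.
exists i, k, j, a; split; first by split.
split.
- by rewrite trEo // x1i.
- by rewrite trEi // x1k /d2; rnorm; ring.
- by rewrite trEj // x1j /d2; rnorm; ring.
Qed.

Lemma lt_of (u v w : rat) : v <= u -> w <= v -> ~ (u = v /\ v = w) -> w < u.
Proof.
move=> h1 h2 ne; rewrite lt_neqAle (le_trans h2 h1) andbT; apply/eqP => e.
apply: ne; rewrite e in h2 *; split; apply/eqP; rewrite eq_le ?h1 ?h2 //.
Qed.

Lemma core3 n (lam x : 'rV[rat]_n) i j k a :
  Ldiff lam -> Reach lam x -> i != j -> j != k -> i != k ->
  a - x ord0 i \is a Num.int -> x ord0 i + x ord0 j + x ord0 k = a + a + a ->
  ~ (x ord0 i = x ord0 j /\ x ord0 j = x ord0 k) ->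
  exists y, Reach lam y /\ has_triple y.
Proof.
move=> hl rx ij jk ik ha hs nae.
have dx := Reach_diff hl rx.
have ha' m : a - x ord0 m \is a Num.int.
  have -> : a - x ord0 m = (a - x ord0 i) + (x ord0 i - x ord0 m) by rnorm; ring.
  by rewrite rpredD.
have ji : j != i by rewrite eq_sym.
have kj : k != j by rewrite eq_sym.
have ki : k != i by rewrite eq_sym.
have [h1|h1] := lerP (x ord0 j) (x ord0 i); have [h2|h2] := lerP (x ord0 k) (x ord0 j);
  have [h3|h3] := lerP (x ord0 k) (x ord0 i).
- apply: (@core3s n lam x i j k a hl rx _ _ _ h1 h2 (lt_of h1 h2 _) (ha' k)) => //; try (by case=> e1 e2; apply: nae; split; congruence); try (by rewrite -hs; rnorm; ring).
- apply: (@core3s n lam x i j k a hl rx _ _ _ h1 h2 (lt_of h1 h2 _) (ha' k)) => //; try (by case=> e1 e2; apply: nae; split; congruence); try (by rewrite -hs; rnorm; ring).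
- apply: (@core3s n lam x i k j a hl rx _ _ _ h3 (ltW h2) (lt_of h3 (ltW h2) _) (ha' j)) => //; try (by case=> e1 e2; apply: nae; split; congruence); try (by rewrite -hs; rnorm; ring).
- apply: (@core3s n lam x k i j a hl rx _ _ _ (ltW h3) h1 (lt_of (ltW h3) h1 _) (ha' j)) => //; try (by case=> e1 e2; apply: nae; split; congruence); try (by rewrite -hs; rnorm; ring).
- apply: (@core3s n lam x j i k a hl rx _ _ _ (ltW h1) h3 (lt_of (ltW h1) h3 _) (ha' k)) => //; try (by case=> e1 e2; apply: nae; split; congruence); try (by rewrite -hs; rnorm; ring).
- apply: (@core3s n lam x j k i a hl rx _ _ _ h2 (ltW h3) (lt_of h2 (ltW h3) _) (ha' i)) => //; try (by case=> e1 e2; apply: nae; split; congruence); try (by rewrite -hs; rnorm; ring).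
- apply: (@core3s n lam x k j i a hl rx _ _ _ (ltW h2) (ltW h1) (lt_of (ltW h2) (ltW h1) _) (ha' i)) => //; try (by case=> e1 e2; apply: nae; split; congruence); try (by rewrite -hs; rnorm; ring).
- apply: (@core3s n lam x k j i a hl rx _ _ _ (ltW h2) (ltW h1) (lt_of (ltW h2) (ltW h1) _) (ha' i)) => //; try (by case=> e1 e2; apply: nae; split; congruence); try (by rewrite -hs; rnorm; ring).
Qed.

Lemma mod3 (s : rat) : s \is a Num.int -> exists2 d, [/\ d \is a Num.int, 0 <= d & d <= 2%:R] &
  exists2 m, m \is a Num.int & s - d = m + m + m.
Proof.
move/intrP => [z ->]; exists ((z %% 3)%Z%:~R).
  split; first exact: intr_int.
    by rewrite ler0z modz_ge0.
  rewrite -[2%:R]/((2:int)%:~R) ler_int -ltzD1; exact: ltz_pmod.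
exists ((z %/ 3)%Z%:~R); first exact: intr_int.
rewrite {1}(divz_eq z 3) intrD addrK -!intrD; congr (_%:~R).
set q := (z %/ 3)%Z; by rewrite mulr_natr !mulrS mulr0n addr0 addrA.
Qed.

Lemma sum_e n (c : 'I_n -> rat) l :
  (\sum_i c i *: ebasis i) ord0 l = c l - (\sum_i c i) / n%:R.
Proof.
rewrite summxE; under eq_bigr => i _ do rewrite !mxE mulrBr.
rewrite sumrB -mulr_suml; congr (_ - _).
rewrite (bigD1 l) //= eqxx mulr1 big1 ?addr0 // => i /negbTE ->; by rewrite mulr0.
Qed.

Lemma weight_val n (lam : 'rV[rat]_n) b :
  lam = \sum_(i < n) (b i)%:~R *: ebasis i ->
  forall l, lam ord0 l = (b l)%:~R - (\sum_i (b i)%:~R) / n%:R.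
Proof. by move=> -> l; rewrite sum_e. Qed.

Lemma weight_diff n (lam : 'rV[rat]_n) : is_weight lam -> Ldiff lam.
Proof.
move=> [b hb] l m; rewrite !(weight_val hb).
have -> : forall u v w : rat, (u - w) - (v - w) = u - v by move=> u v w; rnorm; ring.
by rewrite rpredB ?intr_int.
Qed.

Lemma weight_sum n (lam : 'rV[rat]_n) : (0 < n)%N -> is_weight lam -> \sum_l lam ord0 l = 0.
Proof.
move=> n0 [b hb]; under eq_bigr => l _ do rewrite (weight_val hb).
rewrite sumrB sumr_const card_ord -[X in _ - X]mulr_natr divfK ?subrr //.
by rewrite pnatr_eq0 -lt0n.
Qed.

Lemma Reach_inM n (lam x : 'rV[rat]_n) : Reach lam x -> inM lam x.
Proof.
move=> [cx ix sx]; split=> //.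
exists (fun l => Num.floor (x ord0 l - lam ord0 l)).
have ha : forall l, (Num.floor (x ord0 l - lam ord0 l))%:~R = x ord0 l - lam ord0 l.
  by move=> l; rewrite floorK.
have hs : \sum_l ((Num.floor (x ord0 l - lam ord0 l))%:~R : rat) = 0.
  by under eq_bigr => l _ do rewrite ha; rewrite sumrB sx subrr.
split.
  have : (\sum_l (Num.floor (x ord0 l - lam ord0 l)))%:~R == 0 :> rat.
    by rewrite rmorph_sum /= hs.
  by rewrite intr_eq0 => /eqP ->; rewrite dvdz0.
by apply/rowP => l; rewrite sum_e hs mul0r subr0 ha !mxE.
Qed.

Lemma range2 m (lam : 'rV[rat]_(m.+4)) : Ldiff lam -> dominant lam ->
  \sum_l lam ord0 l = 0 -> (exists i, 1 < `|lam ord0 i|) ->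
  1 + 1 <= lam ord0 ord0 - lam ord0 ord_max.
Proof.
move=> hl hd hs [i hi].
have hP l : lam ord0 l <= lam ord0 ord0 := hd ord0 l (leq0n _).
have hB l : lam ord0 ord_max <= lam ord0 l := hd l ord_max (leq_ord l).
apply: int_lt; first by rewrite rpredB ?rpred1 ?hl.
rewrite ltNge; apply/negP => le.
move: le; rewrite lerBlDr => le.
move: hi; rewrite ltr_normr => /orP [h|h].
  have B0 : 0 < lam ord0 ord_max.
    by have := lt_le_trans h (le_trans (hP i) le); rewrite -ltrBlDl subrr.
  have : \sum_(l < m.+4) lam ord0 ord_max <= \sum_l lam ord0 l.
    by apply: ler_sum => l _; exact: hB l.
  by rewrite sumr_const card_ord hs leNgt pmulrn_lgt0 // B0.
have P0 : lam ord0 ord0 < 0.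
  apply: le_lt_trans le _; rewrite addrC -ltrBrDr sub0r.
  by apply: le_lt_trans (hB i) _; rewrite -ltrNr.
have : \sum_l lam ord0 l <= \sum_(l < m.+4) lam ord0 ord0.
  by apply: ler_sum => l _; exact: hP l.
by rewrite sumr_const card_ord hs leNgt pmulrn_llt0 // P0.
Qed.

Lemma int012 (q : rat) : q \is a Num.int -> 0 <= q -> q <= 2%:R -> [\/ q = 0, q = 1 | q = 2%:R].
Proof.
move/intrP=> [z ->]; rewrite ler0z -[2%:R]/((2:int)%:~R) ler_int.
by case: z => [[|[|[|k]]]|k] //= _ _; [constructor 1|constructor 2|constructor 3].
Qed.

Definition i1 m : 'I_(m.+4) := inord 1.
Definition i2 m : 'I_(m.+4) := inord m.+2.

Lemma v1 m : val (i1 m) = 1%N. Proof. by rewrite /= inordK. Qed.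
Lemma v2 m : val (i2 m) = m.+2. Proof. by rewrite /= inordK. Qed.

Section Main.
Variable m : nat.
Variable lam : 'rV[rat]_(m.+4).
Hypothesis hl : Ldiff lam.
Hypothesis hd : dominant lam.
Local Notation L i := (lam ord0 i).
Local Notation I1 := (i1 m).
Local Notation I2 := (i2 m).
Local Notation I0 := (ord0 : 'I_(m.+4)).
Local Notation I3 := (ord_max : 'I_(m.+4)).
Hypothesis h2 : 1 + 1 <= L I0 - L I3.

Lemma d01 : I0 != I1. Proof. by apply/eqP => /(congr1 val); rewrite v1. Qed.
Lemma d02 : I0 != I2. Proof. by apply/eqP => /(congr1 val); rewrite v2. Qed.
Lemma d03 : I0 != I3. Proof. by []. Qed.
Lemma d12 : I1 != I2. Proof. by apply/eqP => /(congr1 val); rewrite v1 v2. Qed.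
Lemma d13 : I1 != I3. Proof. by apply/eqP => /(congr1 val); rewrite v1. Qed.
Lemma d23 : I2 != I3. Proof. apply/eqP => /(congr1 val); rewrite v2 /= => /eqP; by rewrite eqSS eqSS -[X in _ == X]addn1 -{1}[m]addn0 eqn_add2l. Qed.

Lemma hXP : L I1 <= L I0. Proof. exact: hd. Qed.
Lemma hYX : L I2 <= L I1. Proof. by apply: hd; rewrite v1 v2. Qed.
Lemma hBY : L I3 <= L I2. Proof. by apply: hd; rewrite v2 /=. Qed.

Lemma two : 2%:R = 1 + 1 :> rat. Proof. by []. Qed.

Lemma case1 : (L I1 != L I2) \/ (2%:R < L I0 - L I1) ->
  exists y, Reach lam y /\ has_triple y.
Proof.
move=> hc.
have si : (L I0 - L I2) + (L I1 - L I2) \is a Num.int by rewrite rpredD ?hl.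
have [d [di d0 d2] [k ki hk]] := mod3 si.
have dle : d <= L I0 - L I3 by apply: le_trans d2 _; rewrite two; exact: h2.
have r := transfer (Reach_refl lam) d03 di d0 dle.
have y0 : tr lam I0 I3 d ord0 I0 = L I0 - d by apply: trEi.
have y1 : tr lam I0 I3 d ord0 I1 = L I1 by apply: trEo; [rewrite eq_sym d01 | exact: d13].
have y2 : tr lam I0 I3 d ord0 I2 = L I2 by apply: trEo; [rewrite eq_sym d02 | exact: d23].
apply: (@core3 _ lam (tr lam I0 I3 d) I0 I1 I2 (L I2 + k)) => //.
- exact: d01.
- exact: d12.
- exact: d02.
- rewrite y0; have -> : L I2 + k - (L I0 - d) = k - (L I0 - L I2) + d by rnorm; ring.
  by rewrite rpredD // rpredB // hl.
- rewrite y0 y1 y2.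
  transitivity (L I2 + L I2 + L I2 + ((L I0 - L I2 + (L I1 - L I2)) - d)); first by rnorm; ring.
  by rewrite hk; rnorm; ring.
- rewrite y0 y1 y2 => -[e1 e2]; case: hc => [/eqP|]; first by apply.
  have -> : L I0 - L I1 = d by rewrite -e1; rnorm; ring.
  by rewrite ltNge d2.
Qed.

Lemma case2 : L I1 = L I2 -> 2%:R < L I1 - L I3 ->
  exists y, Reach lam y /\ has_triple y.
Proof.
move=> e12 hc.
have si : L I1 - L I3 \is a Num.int by rewrite hl.
have [d [di d0 d2] [k ki hk]] := mod3 si.
have dle : d <= L I0 - L I3.
  apply: le_trans d2 _; apply: le_trans (ltW hc) _; apply: lerD => //; exact: hXP.
have r := transfer (Reach_refl lam) d03 di d0 dle.
have y3 : tr lam I0 I3 d ord0 I3 = L I3 + d by apply: trEj.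
have y1 : tr lam I0 I3 d ord0 I1 = L I1 by apply: trEo; [rewrite eq_sym d01 | exact: d13].
have y2 : tr lam I0 I3 d ord0 I2 = L I2 by apply: trEo; [rewrite eq_sym d02 | exact: d23].
apply: (@core3 _ lam (tr lam I0 I3 d) I3 I1 I2 (L I1 - k)) => //.
- by rewrite eq_sym d13.
- exact: d12.
- by rewrite eq_sym d23.
- rewrite y3; have -> : L I1 - k - (L I3 + d) = (L I1 - L I3) - k - d by rnorm; ring.
  by rewrite rpredB // rpredB // hl.
- rewrite y3 y1 y2 -e12.
  transitivity (L I1 + L I1 + L I1 - ((L I1 - L I3) - d)); first by rnorm; ring.
  by rewrite hk; rnorm; ring.
- rewrite y3 y1 => -[e1 _].
  have : L I1 - L I3 = d by rewrite -e1; rnorm; ring.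
  by move=> ee; move: hc; rewrite ee ltNge d2.
Qed.

Lemma Nn0 : (m.+4)%:R != 0 :> rat. Proof. by rewrite pnatr_eq0. Qed.

Lemma exc_first : \sum_l L l = 0 -> L I1 = L I2 -> L I3 = L I1 ->
  L I0 = L I1 + 2%:R -> lam = lam_first m.+4.
Proof.
move=> hs e12 e31 eP.
have hv l : L l = L I1 + (l == I0)%:R * 2%:R.
  case: (eqVneq l I0) => [->|ne]; first by rewrite mul1r.
  rewrite mul0r addr0; apply/eqP; rewrite eq_le; apply/andP; split.
    apply: hd; rewrite v1 lt0n; apply: contra ne => /eqP h; apply/eqP; exact: val_inj.
  by rewrite -e31; apply: hd; exact: leq_ord.
have hsum : L I1 *+ m.+4 + 2%:R = 0.
  rewrite -hs; under [RHS]eq_bigr => l _ do rewrite hv.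
  by rewrite big_split /= sumr_const card_ord -mulr_suml sum_dl mul1r.
have eX : L I1 = - (2%:R / (m.+4)%:R).
  apply: (mulIf Nn0); rewrite mulNr divfK ?Nn0 // mulr_natr.
  by apply/eqP; rewrite -addr_eq0 hsum.
apply/rowP => l; rewrite mxE hv eX.
case: (eqVneq l I0) => [->|ne] /=.
  by rewrite mul1r mulrBl mulfK ?Nn0 // addrC.
have -> : (val l == 0)%N = false.
  by apply/negbTE; apply: contra ne => /eqP h; apply/eqP; exact: val_inj.
by rewrite mul0r addr0.
Qed.

Lemma exc_last : \sum_l L l = 0 -> L I1 = L I2 -> L I0 = L I1 ->
  L I3 = L I1 - 2%:R -> lam = lam_last m.+4.
Proof.
move=> hs e12 eP eB.
have hv l : L l = L I1 - (l == I3)%:R * 2%:R.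
  case: (eqVneq l I3) => [->|ne]; first by rewrite mul1r.
  rewrite mul0r subr0; apply/eqP; rewrite eq_le; apply/andP; split.
    by rewrite -eP; apply: hd.
  rewrite e12; apply: hd; rewrite v2 -ltnS ltn_neqAle leq_ord andbT.
  by apply: contra ne => /eqP h; apply/eqP; exact: val_inj.
have hsum : L I1 *+ m.+4 - 2%:R = 0.
  rewrite -hs; under [RHS]eq_bigr => l _ do rewrite hv.
  by rewrite sumrB sumr_const card_ord -mulr_suml sum_dl mul1r.
have eX : L I1 = 2%:R / (m.+4)%:R.
  apply: (mulIf Nn0); rewrite divfK ?Nn0 // mulr_natr.
  by apply/eqP; rewrite -subr_eq0 hsum.
apply/rowP => l; rewrite mxE hv eX.
case: (eqVneq l I3) => [->|ne] /=.
  by rewrite eqxx mul1r mulrBl mulfK ?Nn0 // opprB.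
have -> : (val l == m.+3)%N = false.
  by apply/negbTE; apply: contra ne => /eqP h; apply/eqP; exact: val_inj.
by rewrite mul0r subr0.
Qed.

Ltac dneq := solve [ by rewrite ?d01 ?d02 ?d03 ?d12 ?d13 ?d23 | by rewrite eq_sym ?d01 ?d02 ?d03 ?d12 ?d13 ?d23 ].

Lemma case3 : \sum_l L l = 0 -> L I1 = L I2 -> L I1 - L I3 <= 2%:R -> L I0 - L I1 <= 2%:R ->
  (exists y, Reach lam y /\ has_triple y) \/ lam = lam_first m.+4 \/ lam = lam_last m.+4.
Proof.
move=> hs e12 hx hp.
have hx0 : 0 <= L I1 - L I3 by rewrite subr_ge0 e12 hBY.
have hp0 : 0 <= L I0 - L I1 by rewrite subr_ge0 hXP.
have eP : L I0 = L I1 + (L I0 - L I1) by rnorm; ring.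
have eB : L I3 = L I1 - (L I1 - L I3) by rnorm; ring.
have ePB : L I0 - L I3 = (L I0 - L I1) + (L I1 - L I3) by rnorm; ring.
have h2' := h2; rewrite ePB in h2'.
have r0 := Reach_refl lam.
have i1 : (1 : rat) \is a Num.int := rpred1 _.
have l01 : (0 : rat) <= 1 := ler01.
case: (int012 (hl I0 I1) hp0 hp) => hp'; case: (int012 (hl I1 I3) hx0 hx) => hx';
  rewrite hp' in eP h2'; rewrite hx' in eB h2'; try by move: h2'.
- (* 0,2 *) by right; right; apply: exc_last => //; rewrite eP addr0.
- (* 1,1 *) left; exists lam; split => //; exists I0, I1, I3, (L I1); split.
    by split; [exact: d01 | exact: d13 | exact: d03].
  by split.
- (* 1,2 *) left.
  have le1 : 1 <= L I2 - L I3 by rewrite -e12 hx'.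
  have r := transfer r0 d23 i1 l01 le1.
  exists (tr lam I2 I3 1); split => //; exists I0, I1, I2, (L I1); split.
    by split; [exact: d01 | exact: d12 | exact: d02].
  split.
  + by rewrite trEo; try dneq.
  + by rewrite trEo; try dneq.
  + by rewrite trEi; try dneq; rewrite -e12.
- (* 2,0 *) right; left; apply: exc_first => //; by rewrite eB subr0.
- (* 2,1 *) left.
  have le1 : 1 <= L I0 - L I1 by rewrite hp'.
  have r := transfer r0 d01 i1 l01 le1.
  exists (tr lam I0 I1 1); split => //; exists I0, I2, I3, (L I1); split.
    by split; [exact: d02 | exact: d23 | exact: d03].
  split.
  + rewrite trEi; try dneq; by rewrite eP two; rnorm; ring.
  + by rewrite trEo; try dneq.
  + by rewrite trEo; try dneq.
- (* 2,2 *) left.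
  have le1 : 1 <= L I0 - L I3 by rewrite ePB hp' hx'.
  have r := transfer r0 d03 i1 l01 le1.
  exists (tr lam I0 I3 1); split => //; exists I0, I1, I3, (L I1); split.
    by split; [exact: d01 | exact: d13 | exact: d03].
  split.
  + rewrite trEi; try dneq; by rewrite eP two; rnorm; ring.
  + by rewrite trEo; try dneq.
  + rewrite trEj; try dneq; by rewrite eB two; rnorm; ring.
Qed.

End Main.

Unset Implicit Arguments.

Theorem lemma10 (n : nat) (lam : 'rV[rat]_n) :
  (4 <= n)%N ->
  is_weight lam ->
  dominant lam ->
  (forall i : 'I_n, ~ exists z : int, lam ord0 i = z%:~R) ->
  (exists i : 'I_n, 1 < `|lam ord0 i|) ->
  ~ (exists x : 'rV[rat]_n, inM lam x /\ has_triple x) ->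
  lam = lam_first n \/ lam = lam_last n.
Proof.
case: n lam => [|[|[|[|m]]]] lam //= _ hw hd _ hbig hno.
have hl := weight_diff hw.
have hs := weight_sum (isT : (0 < m.+4)%N) hw.
have h2 := range2 hl hd hs hbig.
have key : (exists y, Reach lam y /\ has_triple y) \/ lam = lam_first m.+4 \/ lam = lam_last m.+4.
  case: (boolP (lam ord0 (i1 m) != lam ord0 (i2 m))) => [ne|/negPn/eqP e12].
    by left; apply: (case1 hl h2); left.
  case: (lerP (lam ord0 ord0 - lam ord0 (i1 m)) 2%:R) => hp; last first.
    by left; apply: (case1 hl h2); right.
  case: (lerP (lam ord0 (i1 m) - lam ord0 ord_max) 2%:R) => hx; last first.
    by left; exact: (case2 hl hd e12 hx).
  exact: (case3 hl hd h2 hs e12 hx hp).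
case: key => [[y [ry ty]]|//]; exfalso; apply: hno; exists y; split => //.
exact: Reach_inM.
Qed.
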